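(* Take the special vertex $v=0$. Let $I,J$ be non-crossing $m$-subsets of $\{1,\dots,n\}$ (equivalently $\operatorname{Ext}^1_A(M_I,M_J)=0$). Then $$c(I,J)=\kappa(M_J,M_I)-\kappa(M_I,M_J),$$ where $c(I,J)$ is the exponent in the quasi-commutation relation $\Delta_q^I\Delta_q^J=q^{c(I,J)}\Delta_q^J\Delta_q^I$ of quantum minors in the quantum Grassmannian.
   Context: Fix integers $1\le m<n$. $A$ is the quotient of the complete path algebra of the quiver with vertices $\mathbb{Z}_n$ and arrows $x_a\colon a-1\to a$, $y_a\colon a\to a-1$ ($a\in\{1,\dots,n\}$) by the relations $xy=yx$, $x^m=y^{n-m}$ at every vertex; centre $Z=\mathbb{C}[[t]]$; $\operatorname{CM}(A)$ is the category of finitely generated $A$-modules free over $Z$. For an $m$-subset $I$, $M_I$ has $e_jM_I=Z$ for all $j$, $x_a$ acting by $1$ if $a\in I$ and $t$ otherwise, $y_a$ acting by $t$ if $a\in I$ and $1$ otherwise. $\kappa(M,N)=\dim_{\mathbb{C}}\operatorname{coker}\big(\operatorname{Hom}_A(M,N)\to\operatorname{Hom}_Z(e_vM,e_vN)\big)$. Two $m$-subsets $I,J$ are non-crossing if either (i) $J\setminus I=J'\sqcup J''$ with $J'<(I\setminus J)<J''$, or (ii) $I\setminus J=I'\sqcup I''$ with $I'<(J\setminus I)<I''$ (where $X<Y$ means every element of $X$ is less than every element of $Y$); then $c(I,J)=|J''|-|J'|$ in case (i) and $c(I,J)=|I'|-|I''|$ in case (ii) (these agree if both hold). The quantum Grassmannian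 $\mathbb{C}_q[\operatorname{Gr}(m,n)]$ is the subalgebra of the quantum matrix algebra $\mathbb{C}_q[M_{m\times n}]$ generated by the quantum minors $\Delta_q^I=\sum_{\sigma\in S_m}(-q)^{\ell(\sigma)}x_{1,i_{\sigma(1)}}\cdots x_{m,i_{\sigma(m)}}$ ($I=\{i_1<\dots<i_m\}$), where $\mathbb{C}_q[M_{m\times n}]$ is generated over $\mathbb{C}[q^{\pm1}]$ by $x_{ij}$ with relations $x_{ij}x_{st}=qx_{st}x_{ij}$ if $i=s,j<t$ or $i<s,j=t$; $x_{ij}x_{st}=x_{st}x_{ij}$ if $i<s,j>t$; $x_{ij}x_{st}=x_{st}x_{ij}+(q-q^{-1})x_{sj}x_{it}$ if $i<s,j<t$. It is known (Leclerc–Zelevinsky) that for non-crossing $I,J$, $\Delta_q^I\Delta_q^J=q^{c(I,J)}\Delta_q^J\Delta_q^I$. *)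

(* Defs.v *)
(* C is modelled by algC (algebraic complex numbers). *)
From HB Require Import structures.
From mathcomp Require Import all_boot all_order all_algebra all_field.
Unset Printing Implicit Defensive.
Import Order.TTheory GRing.Theory Num.Theory.
Local Open Scope ring_scope.

(* Formal power series Z = C[[t]]: coefficient sequences. *)
Definition series := nat -> algC.
Definition s1 : series := fun k => (k == 0%N)%:R.
Definition st : series := fun k => (k == 1%N)%:R.
Definition smul (f g : series) : series :=
  fun k => \sum_(i < k.+1) f i * g (k - i)%N.

Definition lincomb (d : nat) (c : 'I_d -> algC) (b : 'I_d -> series) : series :=
  fun k => \sum_(i < d) c i * b i k.
Definition ssub (f g : series) : series := fun k => f k - g k.

(* dim_C (Z / S) = d, for a subset S of Z (here always a Z-submodule) *)
Definition coker_dim (S : series -> Prop) (d : nat) : Prop :=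
  exists b : 'I_d -> series,
    (forall c : 'I_d -> algC, S (lincomb d c b) -> forall i, c i = 0) /\
    (forall z : series, exists c : 'I_d -> algC, S (ssub z (lincomb d c b))).

(* The module M_I: e_j M_I = Z, x_a acts by 1 if a \in I else t,
   y_a acts by t if a \in I else 1  (a in {1..n}, subsets of 'I_n.+1 avoiding 0). *)
Definition xM (n : nat) (I : {set 'I_n.+1}) (a : nat) : series :=
  if (inord a : 'I_n.+1) \in I then s1 else st.
Definition yM (n : nat) (I : {set 'I_n.+1}) (a : nat) : series :=
  if (inord a : 'I_n.+1) \in I then st else s1.

(* A-module homomorphisms M_I -> M_J: a Z-linear map (multiplication by a power
   series f j) at each vertex j in Z_n (represented by 0..n-1), commuting with
   the arrows x_a : a-1 -> a and y_a : a -> a-1, a = 1..n (vertex n = vertex 0). *)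
Definition is_hom (n : nat) (I J : {set 'I_n.+1}) (f : nat -> series) : Prop :=
  forall a : nat, (1 <= a <= n)%N ->
    smul (f (a %% n)%N) (xM n I a) = smul (xM n J a) (f a.-1) /\
    smul (f a.-1) (yM n I a) = smul (yM n J a) (f (a %% n)%N).

(* image of Hom_A(M_I, M_J) -> Hom_Z(e_0 M_I, e_0 M_J) = Z *)
Definition hom_image (n : nat) (I J : {set 'I_n.+1}) : series -> Prop :=
  fun g => exists f, is_hom n I J f /\ f 0%N = g.

Definition kappa_is (n : nat) (I J : {set 'I_n.+1}) (d : nat) : Prop :=
  coker_dim (hom_image n I J) d.

Definition set_lt (n : nat) (X Y : {set 'I_n.+1}) : Prop :=
  forall x y, x \in X -> y \in Y -> (val x < val y)%N.

Definition noncrossing_c (n : nat) (I J : {set 'I_n.+1}) (k : int) : Prop :=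
  (exists J' J'' : {set 'I_n.+1},
     J' :|: J'' = J :\: I /\ [disjoint J' & J''] /\
     set_lt n J' (I :\: J) /\ set_lt n (I :\: J) J'' /\
     k = (#|J''|%:Z - #|J'|%:Z)) \/
  (exists I' I'' : {set 'I_n.+1},
     I' :|: I'' = I :\: J /\ [disjoint I' & I''] /\
     set_lt n I' (J :\: I) /\ set_lt n (J :\: I) I'' /\
     k = (#|I'|%:Z - #|I''|%:Z)).

(* Main.v *)
Require Import Defs.
From HB Require Import structures.
From mathcomp Require Import all_boot all_order all_algebra all_field zify.
From Stdlib Require Import FunctionalExtensionality.
Import Order.TTheory GRing.Theory Num.Theory.
Set Implicit Arguments. Unset Strict Implicit.
Local Open Scope ring_scope.
Definition tsh (f : series) : series := fun k => if k is k'.+1 then f k' else 0.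

Definition Rr (e : int) (u v : series) : Prop :=
  (forall i j : nat, i%:Z - j%:Z = e -> u i = v j) /\
  (forall i : nat, i%:Z < e -> u i = 0) /\
  (forall j : nat, j%:Z < - e -> v j = 0).

Lemma Rr_sym e u v : Rr e u v -> Rr (- e) v u.
Proof.
case=> [h1 [h2 h3]]; split; [|split].
- move=> i j hij; symmetry; apply: h1; lia.
- move=> i hi; apply: h3; lia.
- move=> j hj; apply: h2; lia.
Qed.

Lemma Rr_trans e1 e2 u v w : Rr e1 u v -> Rr e2 v w -> Rr (e1 + e2) u w.
Proof.
case=> [a1 [a2 a3]] [b1 [b2 b3]]; split; [|split].
- move=> i j hij.
  case: (lerP 0 (i%:Z - e1)) => hm.
  + have -> : u i = v (absz (i%:Z - e1)) by apply: a1; lia.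
    apply: b1; lia.
  + rewrite a2; last lia. rewrite b3 //; lia.
- move=> i hi.
  case: (lerP 0 (i%:Z - e1)) => hm.
  + have -> : u i = v (absz (i%:Z - e1)) by apply: a1; lia.
    apply: b2; lia.
  + apply: a2; lia.
- move=> j hj.
  case: (lerP 0 (j%:Z + e2)) => hm.
  + have <- : v (absz (j%:Z + e2)) = w j by apply: (b1 _ j); lia.
    apply: a3; lia.
  + apply: b3; lia.
Qed.

Lemma Rr0 u v : Rr 0 u v <-> u = v.
Proof.
split.
- case=> [h _]; apply: functional_extensionality => k; apply: h; lia.
- move=> ->; split; [|split].
  + move=> i j h; congr v; lia.
  + move=> i h; lia.
  + move=> i h; lia.
Qed.

Lemma Rrm1 u v : Rr (-1) u v <-> v = tsh u.
Proof.
split.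
- case=> [h1 [_ h3]]; apply: functional_extensionality => k.
  case: k => [|k] /=; first by apply: h3; lia.
  symmetry; apply: h1; lia.
- move=> ->; split; [|split].
  + move=> i j h; have -> : j = i.+1 by lia. by [].
  + move=> i h; lia.
  + move=> j h; have -> : j = 0%N by lia. by [].
Qed.

Lemma Rr1 u v : Rr 1 u v <-> u = tsh v.
Proof.
split.
- move/Rr_sym; rewrite (_ : - 1 = -1) // => /Rrm1 //.
- move=> h; have : Rr (-1) v u by apply/Rrm1.
  by move/Rr_sym; rewrite opprK.
Qed.

Lemma smul_f1 f : smul f s1 = f.
Proof.
apply: functional_extensionality => k; rewrite /smul big_ord_recr /= subnn /s1 /= mulr1.
rewrite big1 ?add0r // => i _; rewrite subn_eq0 leqNgt ltn_ord /= mulr0 //.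
Qed.

Lemma smul_1f f : smul s1 f = f.
Proof.
apply: functional_extensionality => k; rewrite /smul big_ord_recl /= subn0 /s1 /= mul1r.
rewrite big1 ?addr0 // => i _; rewrite /bump /= mul0r //.
Qed.

Lemma smul_ft f : smul f st = tsh f.
Proof.
apply: functional_extensionality => k; rewrite /smul /st /tsh.
case: k => [|k]; first by rewrite big_ord_recr big_ord0 /= mulr0 add0r.
rewrite big_ord_recr /= subnn /= mulr0 addr0 big_ord_recr /= subSnn /= mulr1.
rewrite big1 ?add0r // => i _.
have h : (k.+1 - i != 1)%N by have := ltn_ord i; lia.
by rewrite (negbTE h) mulr0.
Qed.

Lemma smul_tf f : smul st f = tsh f.
Proof.
apply: functional_extensionality => k; rewrite /smul /st /tsh.
case: k => [|k]; first by rewrite big_ord_recr big_ord0 /= mul0r add0r.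
rewrite big_ord_recl /= mul0r add0r big_ord_recl /= mul1r subSS subn0.
rewrite big1 ?addr0 // => i _; by rewrite /bump /= mul0r.
Qed.

Lemma tsh_inj u v : tsh u = tsh v -> u = v.
Proof.
move=> h; apply: functional_extensionality => k.
by have := congr1 (fun f => f k.+1) h.
Qed.

Lemma step (bI bJ : bool) u v :
 (smul v (if bI then s1 else st) = smul (if bJ then s1 else st) u /\
  smul u (if bI then st else s1) = smul (if bJ then st else s1) v)
 <-> Rr ((bJ : nat)%:Z - (bI : nat)%:Z) u v.
Proof.
case: bI; case: bJ => /=;
  rewrite ?smul_f1 ?smul_1f ?smul_ft ?smul_tf.
- rewrite subrr Rr0; split; [by case=> ->|by move=> ->].
- rewrite (_ : 0%:Z - 1 = -1) // Rrm1; split; [by case|by move=> ->].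
- rewrite (_ : 1%:Z - 0 = 1) // Rr1; split; [by case=> ->|by move=> ->].
- rewrite subrr Rr0; split; [by case=> /tsh_inj ->|by move=> ->].
Qed.
Definition cnt n (X : {set 'I_n.+1}) (j : nat) : nat := #|[set x in X | (val x <= j)%N]|.
Arguments cnt {n}.

Lemma cnt_step n (X : {set 'I_n.+1}) a : (1 <= a <= n)%N ->
  cnt X a = (cnt X a.-1 + (inord a \in X))%N.
Proof.
move=> ha; rewrite /cnt (cardsD1 (inord a)) addnC; congr addn.
- apply: eq_card => x; rewrite !inE -(inj_eq val_inj) /= inordK; last lia.
  case: (x \in X); rewrite /= ?andbF //.
  have := ltn_ord x; case: (ltngtP (nat_of_ord x) a) => h _ /=.
  + by symmetry; apply/idP; lia.
  + by symmetry; apply/negbTE/negP => ?; lia.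
  + by symmetry; apply/negbTE/negP => ?; lia.
- rewrite inE (_ : val (inord a : 'I_n.+1) = a); last by rewrite /= inordK //; lia.
  by rewrite leqnn andbT.
Qed.

Lemma cnt_all n (X : {set 'I_n.+1}) j :
  (forall x, x \in X -> (val x <= j)%N) -> cnt X j = #|X|.
Proof.
move=> h; rewrite /cnt; apply: eq_card => x; rewrite !inE.
by case hx: (x \in X) => //=; rewrite h.
Qed.

Lemma cnt_full n (X : {set 'I_n.+1}) : cnt X n = #|X|.
Proof. by apply: cnt_all => x _; have := ltn_ord x. Qed.

Lemma cnt_none n (X : {set 'I_n.+1}) j :
  (forall x, x \in X -> (j < val x)%N) -> cnt X j = 0%N.
Proof.
move=> h; rewrite /cnt; apply/eqP; rewrite cards_eq0; apply/eqP/setP => x.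
rewrite !inE; case hx: (x \in X) => //=; by have := h x hx; rewrite ltnNge => /negbTE ->.
Qed.

Lemma cnt0 n (X : {set 'I_n.+1}) : ord0 \notin X -> cnt X 0 = 0%N.
Proof.
move=> h; apply: cnt_none => x hx; rewrite lt0n; apply/negP => /eqP h0.
have : x = ord0 by apply: val_inj. by move=> e; rewrite -e hx in h.
Qed.

Lemma cnt_le n (X : {set 'I_n.+1}) j : (cnt X j <= #|X|)%N.
Proof. by apply: subset_leq_card; apply/subsetP => x; rewrite inE => /andP[]. Qed.

Lemma cnt_pos n (X : {set 'I_n.+1}) j : (0 < cnt X j)%N ->
  exists x, x \in X /\ (val x <= j)%N.
Proof.
rewrite /cnt card_gt0 => /set0Pn [x]; rewrite inE => /andP[h1 h2]; by exists x.
Qed.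

Lemma cnt_U n (X Y : {set 'I_n.+1}) j : [disjoint X & Y] ->
  cnt (X :|: Y) j = (cnt X j + cnt Y j)%N.
Proof.
move=> hd; rewrite /cnt -cardsUI.
have -> : [set x in X | (val x <= j)%N] :&: [set x in Y | (val x <= j)%N] = set0.
  apply/setP => x; rewrite !inE; move/disjoint_setI0: hd => /setP /(_ x).
  rewrite !inE; case: (x \in X); case: (x \in Y) => //=; by rewrite andbF.
rewrite cards0 addn0; apply: eq_card => x; rewrite !inE.
by rewrite andb_orl.
Qed.

Lemma cnt_ID n (X Y : {set 'I_n.+1}) j :
  cnt X j = (cnt (X :&: Y) j + cnt (X :\: Y) j)%N.
Proof.
rewrite -cnt_U; last first.
  by rewrite -setI_eq0; apply/eqP/setP => x; rewrite !inE; case: (x \in X); case: (x \in Y).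
rewrite /cnt; apply: eq_card => x; rewrite !inE.
by case: (x \in X); case: (x \in Y).
Qed.

Definition pf n (I J : {set 'I_n.+1}) (j : nat) : int := (cnt J j)%:Z - (cnt I j)%:Z.
Arguments pf {n}.
Definition ppos (z : int) : nat := match z with Posz k => k | Negz _ => 0%N end.
Definition Dm n (I J : {set 'I_n.+1}) : nat := \max_(j < n.+1) ppos (pf I J j).
Arguments Dm {n}.
Definition shz (e : int) (g : series) : series :=
  fun k => if (0 <= k%:Z + e) then g (absz (k%:Z + e)) else 0.

Lemma ppos_ge z : z <= (ppos z)%:Z.
Proof. by case: z => // k. Qed.

Lemma ppos_le z (k : nat) : z <= k%:Z -> (ppos z <= k)%N.
Proof. case: z => [z|z] /= h; lia. Qed.

Lemma ppos_gt z (k : nat) : k%:Z <= z -> (k <= ppos z)%N.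
Proof. case: z => [z|z] /= h; lia. Qed.

Lemma Rr_shz e g (D : nat) : e <= D%:Z -> (forall k, (k < D)%N -> g k = 0) ->
  Rr e g (shz e g).
Proof.
move=> he hg; split; [|split].
- move=> i j hij; rewrite /shz.
  have h0 : 0 <= j%:Z + e by lia.
  rewrite h0; congr g; lia.
- move=> i hi; apply: hg; lia.
- move=> j hj; rewrite /shz.
  have h0 : (0 <= j%:Z + e) = false by apply/negbTE; rewrite -ltNge; lia.
  by rewrite h0.
Qed.

Lemma pf_step n (I J : {set 'I_n.+1}) a : (1 <= a <= n)%N ->
  pf I J a = pf I J a.-1 + (((inord a : 'I_n.+1) \in J) : nat)%:Z
             - (((inord a : 'I_n.+1) \in I) : nat)%:Z.
Proof.
move=> ha; rewrite /pf (cnt_step J ha) (cnt_step I ha) !PoszD; lia.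
Qed.

Lemma pf0 n (I J : {set 'I_n.+1}) : ord0 \notin I -> ord0 \notin J -> pf I J 0 = 0.
Proof. by move=> h1 h2; rewrite /pf !cnt0. Qed.

Lemma pfn n (I J : {set 'I_n.+1}) : #|I| = #|J| -> pf I J n = 0.
Proof. by move=> h; rewrite /pf !cnt_full h subrr. Qed.

Lemma pf_mod n (I J : {set 'I_n.+1}) a : ord0 \notin I -> ord0 \notin J ->
  #|I| = #|J| -> (1 <= a <= n)%N -> pf I J (a %% n) = pf I J a.
Proof.
move=> h1 h2 h3 ha; case: (ltngtP a n) => h.
- by rewrite modn_small.
- lia.
- by rewrite h modnn pf0 // pfn.
Qed.

Lemma pf_leD n (I J : {set 'I_n.+1}) j : (j <= n)%N -> pf I J j <= (Dm I J)%:Z.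
Proof.
move=> hj; apply: (le_trans (ppos_ge _)); rewrite lez_nat.
by apply: (@leq_bigmax_cond _ (fun _ => true) (fun j : 'I_n.+1 => ppos (pf I J j)) (Ordinal (hj : (j < n.+1)%N))).
Qed.

Lemma hom_at n (I J : {set 'I_n.+1}) (f : nat -> series) a :
  (smul (f (a %% n)%N) (xM n I a) = smul (xM n J a) (f a.-1) /\
   smul (f a.-1) (yM n I a) = smul (yM n J a) (f (a %% n)%N))
  <-> Rr ((((inord a : 'I_n.+1) \in J) : nat)%:Z - (((inord a : 'I_n.+1) \in I) : nat)%:Z)
        (f a.-1) (f (a %% n)%N).
Proof. by rewrite /xM /yM step. Qed.

Lemma char n (I J : {set 'I_n.+1}) g : (0 < n)%N ->
  ord0 \notin I -> ord0 \notin J -> #|I| = #|J| ->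
  hom_image n I J g <-> (forall k, (k < Dm I J)%N -> g k = 0).
Proof.
move=> hn h1 h2 h3; split.
- case=> f [hf hf0].
  have claim : forall j, (j <= n)%N -> Rr (pf I J j) g (f (j %% n)%N).
    elim=> [|j IH] hj.
      by rewrite pf0 // mod0n hf0; apply/Rr0.
    have hj1 : (1 <= j.+1 <= n)%N by lia.
    have := IH (ltnW hj); rewrite modn_small // => R1.
    have /hom_at R2 := hf _ hj1.
    have := Rr_trans R1 R2; rewrite (pf_step I J hj1) /=.
    by rewrite addrA.
  move=> k hk; case: (eqVneq (g k) 0) => // hgk.
  have : (Dm I J <= k)%N.
    apply/bigmax_leqP => j _; apply: ppos_le.
    rewrite leNgt; apply/negP => hlt.
    have [_ [H _]] := claim j (ltnSE (ltn_ord j)).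
    by move: hgk; rewrite H // eqxx.
  by move=> hD; rewrite ltnNge hD in hk.
- move=> hg.
  exists (fun j => shz (pf I J j) g); split.
  + move=> a ha; apply: (proj2 (@hom_at n I J (fun j => shz (pf I J j) g) a)).
    have ha1 : (a.-1 <= n)%N by lia.
    have ha2 : (a <= n)%N by lia.
    have R1 := Rr_sym (Rr_shz (pf_leD I J ha1) hg).
    have R2 := Rr_shz (pf_leD I J ha2) hg.
    rewrite -(pf_mod h1 h2 h3 ha) in R2.
    have := Rr_trans R1 R2.
    rewrite (pf_mod h1 h2 h3 ha) (pf_step I J ha).
    by rewrite (_ : forall x y z : int, - x + (x + y - z) = y - z) // => x y z; lia.
  + rewrite pf0 //; symmetry; apply/Rr0.
    by apply: (@Rr_shz 0 g (Dm I J)) => //.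
Qed.

Definition bas d : 'I_d -> series := fun i k => (k == val i)%:R.

Lemma lin_val d (c : 'I_d -> algC) (i : 'I_d) : lincomb d c (@bas d) (val i) = c i.
Proof.
rewrite /lincomb /bas (bigD1 i) //= eqxx mulr1 big1 ?addr0 // => j hj.
have -> : (val i == val j) = false.
  by apply/negbTE; apply: contra hj => /eqP e; apply/eqP/val_inj.
by rewrite mulr0.
Qed.

Lemma kappa_char n (I J : {set 'I_n.+1}) (D : nat) :
  (forall g, hom_image n I J g <-> (forall k, (k < D)%N -> g k = 0)) ->
  kappa_is n I J D.
Proof.
move=> hc; exists (@bas D); split.
- move=> c /hc h i; rewrite -lin_val; apply: h; exact: ltn_ord.
- move=> z; exists (fun i => z (val i)); apply/hc => k hk.
  rewrite /ssub (lin_val (fun i : 'I_D => z (val i)) (Ordinal hk)) /=.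
  by rewrite subrr.
Qed.

Lemma exmax n (X : {set 'I_n.+1}) x0 : x0 \in X ->
  exists2 x, x \in X & forall y, y \in X -> (val y <= val x)%N.
Proof.
move=> hx0.
case: (@arg_maxnP _ x0 (mem X) (fun i : 'I_n.+1 => val i) hx0) => x hx hm.
by exists x.
Qed.

Lemma Dm_eq n (I J : {set 'I_n.+1}) (s : nat) :
  (forall j, pf I J j <= s%:Z) -> (exists j, (j <= n)%N /\ s%:Z <= pf I J j) ->
  Dm I J = s.
Proof.
move=> hu [j [hj hl]]; apply/eqP; rewrite eqn_leq; apply/andP; split.
- apply/bigmax_leqP => i _; exact: ppos_le.
- apply: leq_trans (ppos_gt hl) _.
  exact: (@leq_bigmax_cond _ (fun _ => true) (fun j : 'I_n.+1 => ppos (pf I J j)) (Ordinal (hj : (j < n.+1)%N))).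
Qed.

Lemma pf_split n (I J : {set 'I_n.+1}) j :
  pf I J j = (cnt (J :\: I) j)%:Z - (cnt (I :\: J) j)%:Z.
Proof.
rewrite /pf (cnt_ID J I j) (cnt_ID I J j) setIC !PoszD; lia.
Qed.

Lemma case_i n (I J J' J'' : {set 'I_n.+1}) :
  ord0 \notin I -> ord0 \notin J -> #|I| = #|J| ->
  J' :|: J'' = J :\: I -> [disjoint J' & J''] ->
  set_lt n J' (I :\: J) -> set_lt n (I :\: J) J'' ->
  Dm I J = #|J'| /\ Dm J I = #|J''|.
Proof.
move=> h1 h2 h3 hU hd hl1 hl2.
set B := I :\: J.
have hA : forall j, cnt (J :\: I) j = (cnt J' j + cnt J'' j)%N.
  by move=> j; rewrite -hU cnt_U.
have hsz : #|B| = (#|J'| + #|J''|)%N.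
  have e1 := cnt_ID J I n; have e2 := cnt_ID I J n.
  rewrite setIC !cnt_full in e1 e2; rewrite -!cnt_full -hA.
  rewrite /B !cnt_full; lia.
have pIJ : forall j, pf I J j = (cnt J' j)%:Z + (cnt J'' j)%:Z - (cnt B j)%:Z.
  by move=> j; rewrite pf_split hA PoszD.
have pJI : forall j, pf J I j = (cnt B j)%:Z - (cnt J' j)%:Z - (cnt J'' j)%:Z.
  by move=> j; rewrite pf_split -/B hA PoszD; lia.
split.
- apply: Dm_eq.
  + move=> j; rewrite pIJ.
    have := cnt_le J' j; have := cnt_le J'' j; have := cnt_le B j.
    case: (posnP (cnt J'' j)) => hz.
    * rewrite hz; lia.
    * case: (cnt_pos hz) => y [hy hyj].
      have -> : cnt B j = #|B|.
        apply: cnt_all => x hx; apply: ltnW; apply: leq_trans (hl2 x y hx hy) hyj.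
      lia.
  + case: (set_0Vmem J') => [->|[x0 hx0]].
      by exists 0%N; split => //; rewrite cards0 pf0.
    case: (exmax hx0) => x hx hm.
    exists (val x); split; first by have := ltn_ord x.
    rewrite pIJ (cnt_all (X := J') hm).
    rewrite (@cnt_none _ B) //; last by move=> y hy; apply: hl1.
    lia.
- apply: Dm_eq.
  + move=> j; rewrite pJI.
    have := cnt_le J' j; have := cnt_le J'' j; have := cnt_le B j.
    case: (posnP (cnt B j)) => hz.
    * rewrite hz; lia.
    * case: (cnt_pos hz) => y [hy hyj].
      have -> : cnt J' j = #|J'|.
        apply: cnt_all => x hx; apply: ltnW; apply: leq_trans (hl1 x y hx hy) hyj.
      lia.
  + case: (set_0Vmem B) => [hB0|[x0 hx0]].
      exists 0%N; split => //; rewrite pf0 //.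
      move: hsz; rewrite hB0 cards0; lia.
    case: (exmax hx0) => x hx hm.
    exists (val x); split; first by have := ltn_ord x.
    rewrite pJI (cnt_all (X := B) hm).
    rewrite (@cnt_none _ J'') //; last by move=> y hy; apply: hl2.
    have := cnt_le J' (val x); lia.
Qed.

Unset Implicit Arguments.
Theorem theorem6p5 (m n : nat) (hm : (1 <= m)%N) (hmn : (m < n)%N)
  (I J : {set 'I_n.+1})
  (hI0 : ord0 \notin I) (hJ0 : ord0 \notin J)
  (hI : #|I| = m) (hJ : #|J| = m)
  (k : int) (hc : noncrossing_c n I J k) :
  exists kIJ kJI : nat,
    kappa_is n I J kIJ /\ kappa_is n J I kJI /\ k = kJI%:Z - kIJ%:Z.
Proof.
have hn : (0 < n)%N by lia.
have hs : #|I| = #|J| by rewrite hI hJ.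
exists (Dm I J), (Dm J I); split; [|split].
- apply: kappa_char => g; exact: char.
- apply: kappa_char => g; exact: char.
- case: hc => [[J' [J'' [hU [hd [hl1 [hl2 ->]]]]]]|[I' [I'' [hU [hd [hl1 [hl2 ->]]]]]]].
  + by case: (case_i hI0 hJ0 hs hU hd hl1 hl2) => -> ->.
  + by case: (case_i hJ0 hI0 (esym hs) hU hd hl1 hl2) => -> ->.
Qed.
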